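(* Let $(V,E)$ be a finite graph and $p\in[0,1]$. Let $(\eta_t,\sigma_t)_{t\ge0}$ be a continuous-time Markov jump process on $\{0,1\}^E\times\{-1,1\}^V$ with the following rates: (i) if $\eta'=\eta$ and there is $x\in V$ with $\sigma'=\sigma^x$ and $\eta(e)=0$ for all $e\in E_x$, the rate from $(\eta,\sigma)$ to $(\eta',\sigma')$ is $1$; (ii) if $\sigma'=\sigma$ and there is $e\in E$ with $\eta'=\eta^e$, the rate is $p\mathbf 1_{\eta(e)=0}\delta_\sigma(e)+(1-p)\mathbf 1_{\eta(e)=1}$; (iii) all other off-diagonal rates are $0$. Suppose $(\eta_0,\sigma_0)$ is distributed according to $IP$. Then for every $e\in E$, every $\eta\in\{0,1\}^E$ and every $s\ge0$, $$\lim_{t\to0}\frac1t\,\mathbb P(\eta_{t+s}=\eta^e\mid\eta_s=\eta)=(1-p)\mathbf 1_{\eta(e)=1}+p\,\mathbf 1_{\eta(e)=0,\ \gamma_\eta(e)=1}+\frac p2\,\mathbf 1_{\eta(e)=0,\ \gamma_\eta(e)=0}.$$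
   Context: Edge configurations $\eta\in\{0,1\}^E$ (1 = open), spin configurations $\sigma\in\{-1,1\}^V$. For $e=\langle x,y\rangle$, $\delta_\sigma(e)=\mathbf 1_{\sigma(x)=\sigma(y)}$. $IP(\eta,\sigma)=\frac1Z\prod_{e\in E}\big(p\mathbf 1_{\eta(e)=1}\delta_\sigma(e)+(1-p)\mathbf 1_{\eta(e)=0}\big)$ with $Z$ the normalizing constant. $E_x$ is the set of edges with endvertex $x$; $\sigma^x$ is $\sigma$ with the spin at $x$ flipped; $\eta^e$ is $\eta$ with the value at edge $e$ changed. For $e=\langle x,y\rangle$, $\gamma_\eta(e)=1$ if $x$ and $y$ are connected by a path of open edges of $\eta$ not using $e$, and $\gamma_\eta(e)=0$ otherwise. *)

(* Defs.v *)
From HB Require Import structures.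
From mathcomp Require Import all_boot all_order all_algebra.
From mathcomp Require Import all_classical all_reals all_analysis.
From mathcomp Require Import Rstruct Rstruct_topology.
From Stdlib Require Import Rdefinitions.

Set Implicit Arguments.
Unset Strict Implicit.
Unset Printing Implicit Defensive.

Import Order.TTheory GRing.Theory Num.Theory.
Local Open Scope ring_scope.

Section Model.
Variables (V E : finType) (src tgt : E -> V).

(* Edge configurations eta : E -> bool (true = open = 1);
   spin configurations sg : V -> bool (true encodes spin +1, false spin -1). *)
Definition econf := {ffun E -> bool}.
Definition sconf := {ffun V -> bool}.
Definition state := (econf * sconf)%type.

Definition delta (sg : sconf) (e : E) : bool := sg (src e) == sg (tgt e).

Definition incident (x : V) (e : E) : bool := (src e == x) || (tgt e == x).

Definition flipV (sg : sconf) (x : V) : sconf :=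
  [ffun y => if y == x then ~~ sg y else sg y].
Definition flipE (eta : econf) (e : E) : econf :=
  [ffun f => if f == e then ~~ eta f else eta f].

Definition open_adj (eta : econf) (e : E) : rel V :=
  fun x y => [exists f, [&& f != e, eta f &
      ((src f == x) && (tgt f == y)) || ((src f == y) && (tgt f == x))]].
Definition gamma (eta : econf) (e : E) : bool :=
  connect (open_adj eta e) (src e) (tgt e).

Definition IPweight (p : R) (a : state) : R :=
  \prod_(e : E) (if a.1 e then p * (delta a.2 e)%:R else 1 - p).
Definition IPZ (p : R) : R := \sum_(a : state) IPweight p a.
Definition IP (p : R) (a : state) : R := IPweight p a / IPZ p.

Definition rate (p : R) (a b : state) : R :=
  \sum_(x : V) ((a.1 == b.1) && (b.2 == flipV a.2 x)
                 && [forall e, incident x e ==> ~~ a.1 e])%:R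
  + \sum_(e : E) ((a.2 == b.2) && (b.1 == flipE a.1 e))%:R
       * (p * ((~~ a.1 e) && delta a.2 e)%:R + (1 - p) * (a.1 e)%:R).

Definition gen (p : R) (a b : state) : R :=
  if a == b then - \sum_(c | c != a) rate p a c else rate p a b.

Definition mmul (A B : state -> state -> R) (a b : state) : R :=
  \sum_(c : state) A a c * B c b.
Definition mid (a b : state) : R := (a == b)%:R.
Fixpoint mpow (A : state -> state -> R) (n : nat) : state -> state -> R :=
  if n is n'.+1 then mmul A (mpow A n') else mid.

(* transition semigroup P_t = exp(t Q) = sum_n t^n Q^n / n! *)
Definition trans (p t : R) (a b : state) : R :=
  limn (fun N : nat => \sum_(n < N) (t ^+ n / (n`!)%:R) * mpow (gen p) n a b).

Definition law_at (p s : R) (b : state) : R :=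
  \sum_(a : state) IP p a * trans p s a b.

Definition prob_eta (p s : R) (eta : econf) : R :=
  \sum_(sg : sconf) law_at p s (eta, sg).

(* P(eta_{t+s} = eta', eta_s = eta), by the Markov property *)
Definition prob_eta2 (p s t : R) (eta eta' : econf) : R :=
  \sum_(sg : sconf) \sum_(sg' : sconf) law_at p s (eta, sg) * trans p t (eta, sg) (eta', sg').

Definition cond_prob (p s t : R) (eta eta' : econf) : R :=
  prob_eta2 p s t eta eta' / prob_eta p s eta.

End Model.

(* Main.v *)
Set Warnings "-all".
Require Import Defs.
From HB Require Import structures.
From mathcomp Require Import all_boot all_order all_algebra.
From mathcomp Require Import all_classical all_reals all_analysis.
From mathcomp Require Import Rstruct Rstruct_topology.
From Stdlib Require Import Rdefinitions.
From mathcomp Require Import ring lra.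
Import Order.TTheory GRing.Theory Num.Theory.
Local Open Scope ring_scope.
Local Open Scope classical_set_scope.
Section Series.
Variables (V E : finType).
Local Notation st := (state V E).
Variable A : st -> st -> R.

Definition KA : R := 1 + \sum_(a : st) \sum_(c : st) `|A a c|.

Lemma KA_ge1 : 1 <= KA.
Proof.
rewrite /KA lerDl; apply: sumr_ge0 => a _; apply: sumr_ge0 => c _; exact: normr_ge0.
Qed.

Lemma rowsum_le (a : st) : \sum_(c : st) `|A a c| <= KA.
Proof.
rewrite /KA [X in _ <= 1 + X](bigD1 a) //= addrCA lerDl.
apply: addr_ge0; first by [].
apply: sumr_ge0 => a' _; apply: sumr_ge0 => c _; exact: normr_ge0.
Qed.

Lemma mpow_bound n a b : `|mpow A n a b| <= KA ^+ n.
Proof.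
elim: n a b => [|n IH] a b /=.
  by rewrite /mid expr0; case: (a == b); rewrite ?normr1 ?normr0.
rewrite /mmul exprS mulrC.
apply: le_trans (ler_norm_sum _ _ _) _.
apply: (@le_trans _ _ (\sum_c `|A a c| * KA ^+ n)).
  apply: ler_sum => c _; rewrite normrM; apply: ler_wpM2l => //.
rewrite -mulr_suml [X in _ <= X]mulrC; apply: ler_wpM2r.
  by apply: exprn_ge0; apply: le_trans KA_ge1.
exact: rowsum_le.
Qed.

Definition Sser (t : R) (a b : st) (N : nat) : R :=
  \sum_(n < N) (t ^+ n / (n`!)%:R) * mpow A n a b.

Lemma Sser_cvg t a b : cvgn (Sser t a b).
Proof.
set u := fun n : nat => (t ^+ n / (n`!)%:R) * mpow A n a b.
have -> : Sser t a b = series u.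
  by apply/funext => N; rewrite /series /= big_mkord.
have := @normed_cvg _ R^o u; apply.
apply: (@series_le_cvg _ _ (exp_coeff (`|t| * KA))).
- by move=> n; exact: normr_ge0.
- move=> n; apply: exp_coeff_ge0; apply: mulr_ge0 => //; apply: le_trans KA_ge1 => //.
- move=> n; rewrite exp_coeffE /u /= normrM normrM normrX exprMn.
  rewrite normfV normr_nat.
  have h1 := mpow_bound n a b.
  have h2 : 0 <= `|t| ^+ n * (n`!%:R^-1 : R).
    by apply: mulr_ge0; [exact: exprn_ge0|rewrite invr_ge0].
  nra.
- exact: is_cvg_series_exp_coeff.
Qed.

Lemma geo_le (x : R) M : 0 <= x -> x <= 1/2 -> \sum_(0 <= i < M) x ^+ i <= 2 - 2 * x ^+ M.
Proof.
move=> x0 x2; elim: M => [|M IH]; first by rewrite big_nil expr0; lra.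
rewrite big_nat_recr //= exprS.
have h := exprn_ge0 M x0. nra.
Qed.

Lemma term_bound t a b n : 0 <= t ->
  `|(t ^+ n / (n`!)%:R) * mpow A n a b| <= (t * KA) ^+ n.
Proof.
move=> t0.
rewrite normrM normrM normfV normr_nat normrX ger0_norm // exprMn -mulrA.
apply: ler_wpM2l; first exact: exprn_ge0.
have h3 : (n`!%:R : R)^-1 <= 1.
  by rewrite invr_le1 ?ler1n ?fact_gt0 // unitfE pnatr_eq0 -lt0n fact_gt0.
apply: le_trans (ler_wpM2r (normr_ge0 _) h3) _; rewrite mul1r.
exact: mpow_bound.
Qed.

Lemma Sser_small t a b (N : nat) : 0 <= t -> t * KA <= 1/2 -> leq 2 N ->
  `|Sser t a b N - mid a b - t * A a b| <= 2 * (t * KA) ^+ 2.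
Proof.
move=> t0 tK N2.
have K0 : 0 <= KA by apply: le_trans KA_ge1.
case: N N2 => [|[|M]] // _.
rewrite /Sser -(big_mkord xpredT (fun n => (t ^+ n / (n`!)%:R) * mpow A n a b)).
rewrite big_nat_recl // big_nat_recl //=.
rewrite expr0 expr1 /= !mul1r divr1.
have -> : mmul A (@mid V E) a b = A a b.
  rewrite /mmul (bigD1 b) //= /mid eqxx mulr1 big1 ?addr0 // => c /negbTE.
  by rewrite eq_sym => ->; rewrite mulr0.
rewrite fact0 invr1 mul1r.
set S := \sum_(0 <= i < M) _.
have -> : mid a b + (t * A a b + S) - mid a b - t * A a b = S by ring.
apply: le_trans (ler_norm_sum _ _ _) _.
apply: (@le_trans _ _ (\sum_(0 <= i < M) (t * KA) ^+ 2 * (t * KA) ^+ i)).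
  apply: ler_sum => i _.
  rewrite -exprD addnC addn2. exact: (term_bound t a b i.+2 t0).
rewrite -mulr_sumr mulrC; apply: ler_wpM2r; first by apply: exprn_ge0; apply: mulr_ge0.
apply: le_trans (@geo_le (t * KA) M (mulr_ge0 t0 K0) tK) _.
have := exprn_ge0 M (mulr_ge0 t0 K0); lra.
Qed.

Lemma trans_small t a b : 0 < t -> t * KA <= 1/2 ->
  `|limn (Sser t a b) - mid a b - t * A a b| <= 2 * (t * KA) ^+ 2.
Proof.
move=> t0 tK.
have K1 := KA_ge1.
have B0 : 0 < 2 * (t * KA) ^+ 2.
  by apply: mulr_gt0 => //; apply: exprn_gt0; apply: mulr_gt0 => //; lra.
set c := mid a b + t * A a b.
have hS : Sser t a b @ \oo --> limn (Sser t a b) := Sser_cvg t a b.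
have hg : (fun N => `|Sser t a b N - c|) @ \oo --> `|limn (Sser t a b) - c|.
  have := cvg_norm (cvgB (V := R^o) (f := Sser t a b) (g := fun _ => c) hS (cvg_cst c)).
  by apply; exact: _.
have -> : limn (Sser t a b) - mid a b - t * A a b = limn (Sser t a b) - c.
  by rewrite /c opprD addrA.
rewrite -(cvg_lim _ hg); last exact: Rhausdorff. apply: limr_le; first by apply/cvg_ex; eexists; exact: hg.
near=> N; rewrite /c opprD addrA.
apply: Sser_small => //; first exact: ltW.
near: N; by exists 2%N.
Unshelve. all: by end_near.
Qed.

End Series.

Section Balance.
Variables (V E : finType) (src tgt : E -> V) (p : R).
Local Notation st := (state V E).

Lemma flipVK (s : sconf V) x : flipV (flipV s x) x = s.
Proof. by apply/ffunP => y; rewrite !ffunE; case: (y == x) => //=; rewrite negbK. Qed.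

Lemma flipEK (e : econf E) f : flipE (flipE e f) f = e.
Proof. by apply/ffunP => y; rewrite !ffunE; case: (y == f) => //=; rewrite negbK. Qed.

Lemma flipE_neq (e : econf E) f g : g != f -> flipE e f g = e g.
Proof. by rewrite ffunE => /negbTE ->. Qed.

Lemma flipE_eq (e : econf E) f : flipE e f f = ~~ e f.
Proof. by rewrite ffunE eqxx. Qed.

Definition sind (a b : st) x : bool :=
  (a.1 == b.1) && (b.2 == flipV a.2 x) && [forall e, incident src tgt x e ==> ~~ a.1 e].

Lemma sind_sym a b x : sind a b x -> sind b a x.
Proof.
case: a b => [ea sa] [eb sb]; rewrite /sind /= => /andP[/andP[/eqP h1 /eqP h2] h3].
rewrite -h1 h2 eqxx flipVK eqxx /=; exact: h3.
Qed.

Lemma sind_weight a b x : sind a b x -> IPweight src tgt p a = IPweight src tgt p b.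
Proof.
case: a b => [ea sa] [eb sb]; rewrite /sind /= => /andP[/andP[/eqP h1 /eqP h2] /forallP h3].
rewrite -h1 h2 /IPweight /=; apply: eq_bigr => f _.
case ef: (ea f) => //.
have := h3 f; rewrite ef /= implybF /incident negb_or => /andP[h4 h5].
by rewrite /delta !ffunE (negbTE h4) (negbTE h5).
Qed.

Definition eind (a b : st) f : bool := (a.2 == b.2) && (b.1 == flipE a.1 f).
Definition erate (a : st) f : R :=
  p * ((~~ a.1 f) && delta src tgt a.2 f)%:R + (1 - p) * (a.1 f)%:R.

Lemma eind_sym a b f : eind a b f -> eind b a f.
Proof.
case: a b => [ea sa] [eb sb]; rewrite /eind /= => /andP[/eqP h1 /eqP h2].
by rewrite -h1 h2 eqxx flipEK eqxx.
Qed.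

Lemma IPweight_split (ea : econf E) sa f :
  IPweight src tgt p (ea, sa) =
  (if ea f then p * (delta src tgt sa f)%:R else 1 - p) *
  \prod_(g | g != f) (if ea g then p * (delta src tgt sa g)%:R else 1 - p).
Proof. by rewrite /IPweight (bigD1 f) //=. Qed.

Lemma edb a b f :
  IPweight src tgt p a * ((eind a b f)%:R * erate a f) =
  IPweight src tgt p b * ((eind b a f)%:R * erate b f).
Proof.
case ab: (eind a b f); last first.
  case ba: (eind b a f); last by rewrite !mul0r !mulr0.
  by move: (eind_sym b a f ba); rewrite ab.
rewrite (eind_sym a b f ab).
move: ab; case: a b => [ea sa] [eb sb]; rewrite /eind /= => /andP[/eqP h1 /eqP h2].
rewrite h2 -h1 /erate /= !(IPweight_split _ _ f) flipE_eq.
have -> : \prod_(g | g != f) (if flipE ea f g then p * (delta src tgt sa g)%:R else 1 - p)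
  = \prod_(g | g != f) (if ea g then p * (delta src tgt sa g)%:R else 1 - p).
  by apply: eq_bigr => g gf; rewrite flipE_neq.
set P := \prod_(g | g != f) _.
by case: (ea f) => /=; rewrite ?RplusE ?RmultE ?RminusE ?R1E ?R0E ?mulr0n ?mulr1n; ring.
Qed.

Lemma rate_split a b : rate src tgt p a b =
  \sum_x (sind a b x)%:R + \sum_f (eind a b f)%:R * erate a f.
Proof. by []. Qed.

Lemma detailed_balance a b :
  IPweight src tgt p a * rate src tgt p a b = IPweight src tgt p b * rate src tgt p b a.
Proof.
rewrite !rate_split !mulrDr !mulr_sumr; congr (_ + _); apply: eq_bigr => x _.
  case ab: (sind a b x).
    by rewrite (sind_sym a b x ab) (sind_weight a b x ab).
  case ba: (sind b a x); last by rewrite !mulr0.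
  by move: (sind_sym b a x ba); rewrite ab.
exact: edb.
Qed.

Lemma weight_gen_sum b : \sum_a IPweight src tgt p a * gen src tgt p a b = 0.
Proof.
rewrite (bigD1 b) //= /gen eqxx.
have -> : \sum_(a | a != b) IPweight src tgt p a * (if a == b then
     - \sum_(c | c != a) rate src tgt p a c else rate src tgt p a b)
   = \sum_(a | a != b) IPweight src tgt p b * rate src tgt p b a.
  by apply: eq_bigr => a /negbTE ->; rewrite detailed_balance.
by rewrite -mulr_sumr mulrN addNr.
Qed.

End Balance.

Lemma cvg_sum_fin (I : finType) (f : I -> nat -> R) (l : I -> R) :
  (forall i, f i @ \oo --> l i) -> (fun N => \sum_i f i N) @ \oo --> \sum_i l i.
Proof.
move=> h.
suff: forall r : seq I, (fun N => \sum_(i <- r) f i N) @ \oo --> \sum_(i <- r) l i by apply.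
elim => [|x r IH].
  have -> : (fun N => \sum_(i <- [::]) f i N) = fun=> 0 by apply/funext => N; rewrite big_nil.
  rewrite big_nil; exact: cvg_cst.
have -> : (fun N => \sum_(i <- x :: r) f i N) = (fun N => f x N + \sum_(i <- r) f i N).
  by apply/funext => N; rewrite big_cons.
rewrite big_cons; exact: (@cvgD _ R^o _ _ _ (f x) (fun N => \sum_(i <- r) f i N) _ _ (h x) IH).
Qed.

Section Stationary.
Variables (V E : finType) (src tgt : E -> V) (p : R).
Local Notation st := (state V E).
Local Notation Q := (gen src tgt p).
Local Notation IPs := (IP src tgt p).

Lemma IP_gen_sum b : \sum_a IPs a * Q a b = 0.
Proof.
have -> : \sum_a IPs a * Q a b = (\sum_a IPweight src tgt p a * Q a b) / IPZ src tgt p.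
  rewrite mulr_suml; apply: eq_bigr => a _; rewrite /IP RdivE mulrAC //.
by rewrite weight_gen_sum mul0r.
Qed.

Lemma IP_mpow n b : \sum_a IPs a * mpow Q n.+1 a b = 0.
Proof.
rewrite /= /mmul.
have -> : \sum_a IPs a * \sum_c Q a c * mpow Q n c b
   = \sum_c (\sum_a IPs a * Q a c) * mpow Q n c b.
  under eq_bigr do rewrite mulr_sumr.
  rewrite exchange_big /=; apply: eq_bigr => c _; rewrite mulr_suml.
  by apply: eq_bigr => a _; rewrite mulrA.
by rewrite big1 // => c _; rewrite IP_gen_sum mul0r.
Qed.

Lemma IP_mid b : \sum_a IPs a * mid a b = IPs b.
Proof.
rewrite (bigD1 b) //= /mid eqxx mulr1 big1 ?addr0 // => a /negbTE ->.
by rewrite mulr0.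
Qed.

Lemma law_atE s b : law_at src tgt p s b = IPs b.
Proof.
set T := fun N => \sum_a IPs a * Sser V E Q s a b N.
have h1 : T @ \oo --> \sum_a IPs a * limn (Sser V E Q s a b).
  apply: cvg_sum_fin => a; apply: cvgMr; exact: (Sser_cvg V E Q s a b).
have h2 : T @ \oo --> IPs b.
  apply: cvg_near_cst; near=> N.
  have : leq 1 N by near: N; exists 1%N.
  move=> hN; rewrite -(prednK hN); move: (N.-1) => M.
  rewrite /T /Sser.
  under eq_bigr do rewrite mulr_sumr.
  rewrite exchange_big /= big_ord_recl /= expr0 fact0 invr1 mulr1.
  have -> : \sum_a IPs a * (1 * mid a b) = IPs b.
    by rewrite -[RHS]IP_mid; apply: eq_bigr => a _; rewrite mul1r.
  rewrite [X in _ + X]big1 ?addr0 // => i _.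
  under eq_bigr do rewrite mulrCA.
  by rewrite -mulr_sumr (IP_mpow (0 + i) b) mulr0.
rewrite /law_at.
have <- := cvg_unique _ h1 h2.
by [].
Unshelve. exact: Rhausdorff. all: by end_near.
Qed.

End Stationary.

Lemma lim_right0 (f : R -> R) (L d C : R) : 0 < d -> 0 <= C ->
  (forall t, 0 < t -> t <= d -> `|f t - L| <= C * t) -> f @ 0^'+ --> L.
Proof.
move=> d0 C0 H; apply/(@cvgrPdist_le _ R^o) => eps eps0.
near=> t.
have t0 : 0 < t by near: t; exact: nbhs_right_gt.
have td : t <= d by near: t; exact: nbhs_right_le.
have te : t <= eps / (C + 1).
  by near: t; apply: nbhs_right_le; apply: divr_gt0 => //; lra.
rewrite distrC; apply: le_trans (H t t0 td) _.
move: te; rewrite ler_pdivlMr; last lra.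
nra.
Unshelve. all: by end_near.
Qed.

Section Comb.
Variables (V E : finType) (src tgt : E -> V) (p : R).
Hypotheses (p0 : 0 <= p) (p1 : p <= 1).
Variables (eta : econf E) (e : E).
Local Notation IPs := (IP src tgt p).

Lemma weight_delta sg : IPweight src tgt p (eta, sg) != 0 ->
  forall f, eta f -> delta src tgt sg f.
Proof.
move=> hw f ef; apply/negPn/negP => hd; move: hw.
by rewrite /IPweight (bigD1 f) //= ef (negbTE hd) mulr0 mul0r eqxx.
Qed.

Lemma IP_delta sg : IPs (eta, sg) != 0 -> forall f, eta f -> delta src tgt sg f.
Proof.
move=> h; apply: weight_delta; apply: contra h => /eqP.
by rewrite /IP RdivE => ->; rewrite mul0r.
Qed.

Lemma gamma_delta sg : gamma src tgt eta e -> IPs (eta, sg) != 0 -> delta src tgt sg e.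
Proof.
move=> hg hIP; have hd := IP_delta sg hIP.
have cl : closed_mem (open_adj src tgt eta e) (mem [pred y | sg y == sg (src e)]).
  move=> x y /existsP[f /and3P[_ ef hxy]]; have /eqP hf := hd f ef.
  rewrite !inE /=.
  by case/orP: hxy => /andP[/eqP hx /eqP hy]; rewrite -hx -hy hf.
have := closed_connect cl hg; rewrite !inE eqxx /delta => /esym /eqP ->.
by [].
Qed.

Definition comp (y : V) : bool := connect (open_adj src tgt eta e) (src e) y.
Definition phi (sg : sconf V) : sconf V := [ffun y => if comp y then ~~ sg y else sg y].

Lemma phiK : involutive phi.
Proof.
by move=> sg; apply/ffunP => y; rewrite !ffunE; case: (comp y) => //; rewrite negbK.
Qed.

Lemma comp_edge f : f != e -> eta f -> comp (src f) = comp (tgt f).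
Proof.
move=> fe ef.
have h1 : open_adj src tgt eta e (src f) (tgt f).
  by apply/existsP; exists f; rewrite fe ef !eqxx.
have h2 : open_adj src tgt eta e (tgt f) (src f).
  by apply/existsP; exists f; rewrite fe ef !eqxx orbT.
apply/idP/idP => h.
  exact: connect_trans h (connect1 h1).
exact: connect_trans h (connect1 h2).
Qed.

Lemma phi_weight sg : ~~ eta e ->
  IPweight src tgt p (eta, phi sg) = IPweight src tgt p (eta, sg).
Proof.
move=> ne; rewrite /IPweight /=; apply: eq_bigr => f _.
case ef: (eta f) => //.
have fe : f != e by apply: contraNneq ne => <-; rewrite ef.
rewrite /delta !ffunE (comp_edge f fe ef).
by case: (comp (tgt f)); case: (sg (src f)); case: (sg (tgt f)).
Qed.

Lemma phi_delta sg : ~~ gamma src tgt eta e ->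
  delta src tgt (phi sg) e = ~~ delta src tgt sg e.
Proof.
move=> ng; rewrite /delta !ffunE.
have -> : comp (src e) by exact: connect0.
have -> : comp (tgt e) = false by apply/negbTE.
by case: (sg (src e)); case: (sg (tgt e)).
Qed.

End Comb.

Arguments erate {V E}.
Arguments sind {V E}.
Arguments eind {V E}.
Arguments phi {V E}.
Arguments comp {V E}.

Ltac simplR := rewrite ?RplusE ?RmultE ?RminusE ?RoppE ?RdivE ?RinvE ?R1E ?R0E ?IZRposE ?INRE ?mulr0n ?mulr1n /=.

Section Main.
Variables (V E : finType) (src tgt : E -> V) (p : R).
Hypotheses (p0 : 0 <= p) (p1 : p <= 1).
Variables (eta : econf E) (e : E).
Local Notation st := (state V E).
Local Notation Q := (gen src tgt p).
Local Notation IPs := (IP src tgt p).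
Local Notation eta' := (flipE eta e).

Lemma eta_neq : eta != eta'.
Proof.
apply/eqP => h; have := congr1 (fun g : econf E => g e) h.
by rewrite flipE_eq; case: (eta e).
Qed.

Lemma flipE_inj f : f != e -> (eta' == flipE eta f) = false.
Proof.
move=> fe; apply/negbTE/eqP => h; have := congr1 (fun g : econf E => g e) h.
rewrite flipE_eq flipE_neq; first by case: (eta e).
by rewrite eq_sym.
Qed.

Lemma gen_flip sg sg' :
  Q (eta, sg) (eta', sg') = (sg == sg')%:R * erate src tgt p (eta, sg) e.
Proof.
rewrite /gen.
have -> : ((eta, sg) == (eta', sg')) = false.
  by apply/negbTE; rewrite xpair_eqE negb_and eta_neq.
rewrite rate_split big1 ?add0r; last first.
  by move=> x _; rewrite /sind /= (negbTE eta_neq).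
rewrite (bigD1 e) //= big1 ?addr0; last first.
  by move=> f fe; rewrite /eind /= flipE_inj // andbF mul0r.
by rewrite /eind /= eqxx andbT.
Qed.

Lemma sum_gen sg : \sum_sg' Q (eta, sg) (eta', sg') = erate src tgt p (eta, sg) e.
Proof.
under eq_bigr do rewrite gen_flip.
rewrite (bigD1 sg) //= eqxx mul1r big1 ?addr0 // => sg' /negbTE.
by rewrite eq_sym => ->; rewrite mul0r.
Qed.

Definition Pe : R := \sum_sg IPs (eta, sg).
Definition Lnum : R := \sum_sg IPs (eta, sg) * erate src tgt p (eta, sg) e.
Definition tv : R := (1 - p) * (eta e)%:R
     + p * ((~~ eta e) && gamma src tgt eta e)%:R
     + p / 2 * ((~~ eta e) && ~~ gamma src tgt eta e)%:R.

Lemma ratio : 0 < Pe -> Lnum / Pe = tv.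
Proof.
move=> P0.
have Pn : Pe != 0 by rewrite gt_eqF.
rewrite /tv; case ee: (eta e) => /=.
  have -> : Lnum = (1 - p) * Pe.
    rewrite /Lnum /Pe mulr_sumr; apply: eq_bigr => sg _.
    by rewrite /erate /= ee /=; simplR; ring.
  by simplR; field.
case g: (gamma src tgt eta e) => /=.
  have -> : Lnum = p * Pe.
    rewrite /Lnum /Pe mulr_sumr; apply: eq_bigr => sg _.
    rewrite /erate /= ee /=.
    case h: (IPs (eta, sg) == 0); first by rewrite (eqP h); simplR; ring.
    by rewrite (gamma_delta V E src tgt p eta e sg g (negbT h)); simplR; ring.
  by simplR; field.
have ng : ~~ gamma src tgt eta e by rewrite g.
have ne : ~~ eta e by rewrite ee.
set S := \sum_sg IPs (eta, sg) * (delta src tgt sg e)%:R.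
have LS : Lnum = p * S.
  rewrite /Lnum /S mulr_sumr; apply: eq_bigr => sg _.
  by rewrite /erate /= ee /=; simplR; ring.
have IPphi sg : IPs (eta, phi src tgt eta e sg) = IPs (eta, sg).
  by rewrite /IP !RdivE (phi_weight V E src tgt p eta e sg ne).
have S2 : S = \sum_sg IPs (eta, sg) * (~~ delta src tgt sg e)%:R.
  rewrite /S (reindex_inj (inv_inj (phiK V E src tgt eta e))) /=.
  by apply: eq_bigr => sg _; rewrite IPphi (phi_delta V E src tgt eta e sg ng).
have SP : S + S = Pe.
  rewrite [X in X + _]S2 /S -big_split /Pe; apply: eq_bigr => sg _.
  by case: (delta src tgt sg e) => /=; simplR; ring.
have S0 : S != 0 by apply: contra Pn; rewrite -SP => /eqP ->; rewrite addr0.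
rewrite LS -SP; simplR; field.
by rewrite -mulr2n mulrn_eq0 negb_or S0.
Qed.

End Main.

Theorem proposition3 (V E : finType) (src tgt : E -> V)
  (no_loop : forall e, src e != tgt e)
  (no_multi : forall e f, (src e = src f /\ tgt e = tgt f) \/ (src e = tgt f /\ tgt e = src f) -> e = f)
  (p : R) (p_ge0 : 0 <= p) (p_le1 : p <= 1)
  (e : E) (eta : {ffun E -> bool}) (s : R) (s_ge0 : 0 <= s)
  (cond_pos : 0 < prob_eta src tgt p s eta) :
  (fun t : R => cond_prob src tgt p s t eta (flipE eta e) / t) @ 0^'+ -->
    ((1 - p) * (eta e)%:R
     + p * ((~~ eta e) && gamma src tgt eta e)%:R
     + p / 2 * ((~~ eta e) && ~~ gamma src tgt eta e)%:R).
Proof.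
set Q := gen src tgt p.
set K := KA V E Q.
set P := Pe V E src tgt p eta.
have PE : prob_eta src tgt p s eta = P.
  by apply: eq_bigr => sg _; rewrite law_atE.
have P0 : 0 < P by rewrite -PE.
have Pn : P != 0 by rewrite gt_eqF.
have K1 : 1 <= K := KA_ge1 V E Q.
rewrite (_ : (1 - p) * _ + _ + _ = Lnum V E src tgt p eta e / P); last first.
  by rewrite ratio.
set S1 := \sum_(sg : sconf V) \sum_(sg' : sconf V) `|IP src tgt p (eta, sg)|.
have S10 : 0 <= S1 by apply: sumr_ge0 => sg _; apply: sumr_ge0 => sg' _; exact: normr_ge0.
apply: (@lim_right0 _ _ (1 / (2 * K)) (2 * K ^+ 2 * S1 / P)).
- by simplR; apply: divr_gt0 => //; lra.
- simplR; apply: divr_ge0; last exact: ltW.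
  by apply: mulr_ge0 => //; apply: mulr_ge0; [lra | apply: exprn_ge0; lra].
move=> t t0; simplR => td.
have tK : t * K <= 1 / 2.
  move: td; rewrite ler_pdivlMr; last lra.
  rewrite mul1r => h; lra.
have hb : forall sg sg' : sconf V,
  `|trans src tgt p t (eta, sg) (flipE eta e, sg') / t - Q (eta, sg) (flipE eta e, sg')|
     <= 2 * K ^+ 2 * t.
  move=> sg sg'.
  have h := trans_small V E Q t (eta, sg) (flipE eta e, sg') t0 tK.
  have hm : mid (eta, sg) (flipE eta e, sg') = 0.
    by rewrite /mid xpair_eqE (negbTE (eta_neq E eta e)).
  rewrite hm subr0 in h.
  have -> : trans src tgt p t (eta, sg) (flipE eta e, sg') / t - Q (eta, sg) (flipE eta e, sg')
     = (limn (Sser V E Q t (eta, sg) (flipE eta e, sg')) - t * Q (eta, sg) (flipE eta e, sg')) / t.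
    by rewrite /trans; field; rewrite gt_eqF.
  rewrite normrM normfV (gtr0_norm t0) ler_pdivrMr //.
  apply: le_trans h _; rewrite exprMn.
  have -> : 2 * (t ^+ 2 * KA V E Q ^+ 2) = 2 * K ^+ 2 * t * t by rewrite /K; ring.
  by [].
set N := \sum_(sg : sconf V) \sum_(sg' : sconf V)
   IP src tgt p (eta, sg) * trans src tgt p t (eta, sg) (flipE eta e, sg').
have CE : cond_prob src tgt p s t eta (flipE eta e) = N / P.
  rewrite /cond_prob RdivE PE; congr (_ / _).
  by apply: eq_bigr => sg _; apply: eq_bigr => sg' _; rewrite law_atE.
set D := \sum_(sg : sconf V) \sum_(sg' : sconf V) IP src tgt p (eta, sg) *
   (trans src tgt p t (eta, sg) (flipE eta e, sg') / t - Q (eta, sg) (flipE eta e, sg')).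
have DE : D = N / t - Lnum V E src tgt p eta e.
  rewrite /D /N /Lnum mulr_suml -sumrB; apply: eq_bigr => sg _.
  rewrite -sum_gen mulr_sumr mulr_suml -sumrB; apply: eq_bigr => sg' _.
  by rewrite mulrBr mulrA.
rewrite CE.
have -> : N / P / t - Lnum V E src tgt p eta e / P = D / P.
  by rewrite DE; field; rewrite Pn gt_eqF.
simplR; rewrite normrM normfV (gtr0_norm P0) ler_pdivrMr //.
have hD : `|D| <= S1 * (2 * K ^+ 2 * t).
  apply: le_trans (ler_norm_sum _ _ _) _.
  rewrite /S1 mulr_suml; apply: ler_sum => sg _.
  apply: le_trans (ler_norm_sum _ _ _) _.
  rewrite mulr_suml; apply: ler_sum => sg' _.
  rewrite normrM; apply: ler_wpM2l => //; exact: hb.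
apply: le_trans hD _.
have -> : 2 * K ^+ 2 * S1 / P * t * P = S1 * (2 * K ^+ 2 * t) by field.
by [].
Qed.
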